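(* For three players whose utility functions satisfy the nonnegativity, Lipschitz and monotonicity conditions described in the context, an $\epsilon$ envy-free solution (in the discrete sense described in the context) can be found in time $O(\log^2(K/\epsilon))$.
   Context: Three players $0,1,2$ have utility functions $u_i$ on Borel subsets of $[0,1]$ satisfying: (nonnegativity) $u_i(\emptyset)=0$ and $u_i(A)>0$ for nonempty pieces (intervals of positive length); (Lipschitz) $u_i([x,y])\le K|y-x|$ for every interval $[x,y]\subseteq[0,1]$; (monotonicity) $u_i(B)\le u_i(A)$ whenever $B\subseteq A$ (e.g. $u_i$ is a measure). Let $N=\lceil K/\epsilon\rceil$. A 2-cut is an integer vector $(x_0,x_1,x_2)$ with $x_j\ge0$, $x_0+x_1+x_2=N$, cutting $[0,1]$ into pieces $[0,x_0/N]$, $[x_0/N,(x_0+x_1)/N]$, $[(x_0+x_1)/N,1]$, indexed $0,1,2$. For a cut $x$, $P_i(x)$ denotes the index of the piece of $x$ of maximum utility for player $i$; it is assumed (non-degeneracy) that this maximizer is unique. The utilities (equivalently, the choices $P_i$) are accessed via queries. Two cuts $x,y$ are adjacent if $|x_i-y_i|\le 1$ for $i=1,2$. An $\epsilon$ envy-free solution is a set $\{x^{(0)},x^{(1)},x^{(2)}\}$ of pairwise adjacent 2-cuts together with a permutation $\pi$ of $\{0,1,2\}$ such that for every player $i$ there is $j$ with $P_i(x^{(j)})=\pi(i)$. *)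

(* Defs.v *)
From HB Require Import structures.
From mathcomp Require Import all_boot all_order all_algebra all_fingroup.
From mathcomp Require Import all_classical all_reals all_analysis.
Set Implicit Arguments. Unset Strict Implicit. Unset Printing Implicit Defensive.
Import Order.TTheory GRing.Theory Num.Theory.
Local Open Scope classical_set_scope.
Local Open Scope ring_scope.

Record cut2 (N : nat) := Cut {
  cx : 'I_3 -> nat ;
  cx_sum : (cx ord0 + cx (inord 1) + cx (inord 2))%N = N }.

Definition cint (R : realType) (a b : R) : set R := [set t | a <= t <= b].

Definition piece_lo (R : realType) N (x : cut2 N) (j : 'I_3) : R :=
  (\sum_(k < 3 | (k < j)%N) cx x k)%:R / N%:R.
Definition piece_hi (R : realType) N (x : cut2 N) (j : 'I_3) : R :=
  if j == inord 2 then 1 else (\sum_(k < 3 | (k <= j)%N) cx x k)%:R / N%:R.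
Definition piece (R : realType) N (x : cut2 N) (j : 'I_3) : set R :=
  cint (@piece_lo R N x j) (@piece_hi R N x j).

Definition utility (R : realType) (K : R) (u : set R -> R) : Prop :=
  u set0 = 0 /\
  (forall a b : R, 0 <= a -> a < b -> b <= 1 -> 0 < u (cint a b)) /\
  (forall a b : R, 0 <= a -> a <= b -> b <= 1 -> u (cint a b) <= K * (b - a)) /\
  (forall A B : set R, measurable A -> measurable B ->
     A `<=` cint 0 1 -> B `<=` A -> u B <= u A).

(* The strict inequality encodes
   both the definition of P_i and the non-degeneracy assumption. *)
Definition choice_of (R : realType) N (u : 'I_3 -> set R -> R)
  (P : 'I_3 -> cut2 N -> 'I_3) : Prop :=
  forall (i : 'I_3) (x : cut2 N) (j : 'I_3),
    j != P i x -> u i (@piece R N x j) < u i (@piece R N x (P i x)).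

Definition adjacent N (x y : cut2 N) : Prop :=
  forall i : 'I_3, (0 < i)%N ->
    (cx x i <= cx y i + 1)%N /\ (cx y i <= cx x i + 1)%N.

Definition envy_free_solution N (P : 'I_3 -> cut2 N -> 'I_3)
  (xs : 'I_3 -> cut2 N) (pi : {perm 'I_3}) : Prop :=
  (forall j k : 'I_3, adjacent (xs j) (xs k)) /\
  (forall i : 'I_3, exists j : 'I_3, P i (xs j) = pi i).

(* Query algorithms (decision trees): a node asks the oracle for P_i(x) and
   branches on the answer; a leaf outputs three cuts and a permutation. *)
Inductive qtree (N : nat) : Type :=
| Leaf : ('I_3 -> cut2 N) -> {perm 'I_3} -> qtree N
| Query : 'I_3 -> cut2 N -> ('I_3 -> qtree N) -> qtree N.

Fixpoint depth N (t : qtree N) : nat :=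
  match t with
  | Leaf _ _ => 0
  | Query _ _ k => (maxn (depth (k ord0)) (maxn (depth (k (inord 1))) (depth (k (inord 2))))).+1
  end.

Fixpoint run N (P : 'I_3 -> cut2 N -> 'I_3) (t : qtree N)
  : ('I_3 -> cut2 N) * {perm 'I_3} :=
  match t with
  | Leaf xs pi => (xs, pi)
  | Query i x k => run P (k (P i x))
  end.

Definition gridN (R : realType) (K eps : R) : nat := `| Num.ceil (K / eps) |%N.

(* Main.v *)
Require Import Defs.
From HB Require Import structures.
From mathcomp Require Import all_boot all_order all_algebra all_fingroup.
From mathcomp Require Import all_classical all_reals all_analysis.
From mathcomp Require Import zify ring lra.
Import Order.TTheory GRing.Theory Num.Theory.

Section Prog.
Variable N : nat.
Definition prog (A : Type) := (A -> qtree N) -> qtree N.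
Definition ret {A} (a : A) : prog A := fun k => k a.
Definition bind {A B} (p : prog A) (f : A -> prog B) : prog B :=
  fun k => p (fun a => f a k).
Definition ask (i : 'I_3) (x : cut2 N) : prog 'I_3 := fun k => Query i x k.
Definition cost {A} (p : prog A) (d : nat) :=
  forall k m, (forall a, (depth (k a) <= m)%N) -> (depth (p k) <= d + m)%N.

Lemma cost_ret A (a : A) : cost (ret a) 0.
Proof. by move=> k m H; apply: H. Qed.
Lemma cost_ask i x : cost (ask i x) 1.
Proof.
move=> k m H /=; rewrite add1n ltnS.
by rewrite !geq_max !H.
Qed.
Lemma cost_bind A B (p : prog A) (f : A -> prog B) d1 d2 :
  cost p d1 -> (forall a, cost (f a) d2) -> cost (bind p f) (d1 + d2).
Proof.
move=> Hp Hf k m H; rewrite -addnA; apply: Hp => a; exact: Hf.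
Qed.
Lemma cost_le A (p : prog A) d d' : (d <= d')%N -> cost p d -> cost p d'.
Proof. move=> le H k m Hk; apply: leq_trans (H k m Hk) _; by rewrite leq_add2r. Qed.

Variable P : 'I_3 -> cut2 N -> 'I_3.
Definition spec {A} (p : prog A) (Q : A -> Prop) :=
  exists v, Q v /\ forall k, run P (p k) = run P (k v).
Lemma spec_ret A (a : A) (Q : A -> Prop) : Q a -> spec (ret a) Q.
Proof. by move=> H; exists a. Qed.
Lemma spec_ask i x (Q : 'I_3 -> Prop) : Q (P i x) -> spec (ask i x) Q.
Proof. by move=> H; exists (P i x). Qed.
Lemma spec_bind A B (p : prog A) (f : A -> prog B) Q R :
  spec p Q -> (forall a, Q a -> spec (f a) R) -> spec (bind p f) R.
Proof.
move=> [v [Qv Hv]] Hf; have [w [Rw Hw]] := Hf v Qv.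
exists w; split => // k; by rewrite /bind Hv Hw.
Qed.
Lemma spec_weaken A (p : prog A) (Q R : A -> Prop) :
  spec p Q -> (forall a, Q a -> R a) -> spec p R.
Proof. by move=> [v [Qv Hv]] H; exists v; split => //; apply: H. Qed.
End Prog.

Arguments ret {N A}.
Arguments bind {N A B}.
Arguments ask {N}.
Arguments cost {N A}.
Arguments spec {N} P {A}.

Fixpoint bsearch {N} (f : nat -> prog N bool) (n lo hi : nat) : prog N nat :=
  match n with
  | 0 => ret lo
  | n'.+1 => if (hi <= lo.+1)%N then ret lo else
      bind (f ((lo + hi) %/ 2)%N)
        (fun b => if b then bsearch f n' ((lo + hi) %/ 2)%N hi
                  else bsearch f n' lo ((lo + hi) %/ 2)%N)
  end.

Lemma cost_bsearch N (f : nat -> prog N bool) d :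
  (forall m, cost (f m) d) -> forall n lo hi, cost (bsearch f n lo hi) (n * d).
Proof.
move=> Hf; elim=> [|n IH] lo hi /=; first exact: cost_ret.
case: ifP => _; first by move=> k m H; apply: leq_trans (H lo) (leq_addl _ _).
rewrite mulSn; apply: cost_bind => // -[]; apply: IH.
Qed.

Lemma spec_bsearch N P (f : nat -> prog N bool) (G : nat -> Prop) n lo hi :
  G lo -> ~ G hi -> (lo < hi)%N -> (hi - lo <= 2 ^ n)%N ->
  (forall m, (lo < m < hi)%N -> spec P (f m) (fun b => b = true <-> G m)) ->
  spec P (bsearch f n lo hi) (fun r => (lo <= r < hi)%N /\ G r /\ ~ G r.+1).
Proof.
elim: n lo hi => [|n IH] lo hi Glo Ghi lohi len Hf /=.
  apply: spec_ret; rewrite expn0 in len.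
  have E : hi = lo.+1 by lia.
  by subst hi; split; [rewrite leqnn ltnSn|split].
case: ifP => hle.
  apply: spec_ret; have E : hi = lo.+1 by lia.
  by subst hi; split; [rewrite leqnn ltnSn|split].
rewrite expnS in len.
have mlo : (lo < (lo + hi) %/ 2)%N by lia.
have mhi : ((lo + hi) %/ 2 < hi)%N by lia.
apply: spec_bind (Hf _ _) _; first by rewrite mlo mhi.
move=> b Hb; case: b Hb => Hb /=.
  apply: spec_weaken; first apply: (IH _ _ (proj1 Hb erefl)) => //.
  - lia.
  - move=> m /andP[m1 m2]; apply: Hf; apply/andP; split => //; lia.
  move=> r [r1 r2]; split => //; lia.
apply: spec_weaken; first apply: IH => //.
- by move/Hb.
- lia.
- move=> m /andP[m1 m2]; apply: Hf; apply/andP; split => //; lia.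
move=> r [r1 r2]; split => //; lia.
Qed.

Definition i1 : 'I_3 := @Ordinal 3 1 isT.
Definition i2 : 'I_3 := @Ordinal 3 2 isT.
Lemma inord1 : inord 1 = i1. Proof. by apply: val_inj; rewrite /= inordK. Qed.
Lemma inord2 : inord 2 = i2. Proof. by apply: val_inj; rewrite /= inordK. Qed.
Lemma ord3 (x : 'I_3) : x = ord0 \/ x = i1 \/ x = i2.
Proof.
case: x => [[|[|[|m]]] H].
- by left; apply: val_inj.
- by right; left; apply: val_inj.
- by right; right; apply: val_inj.
- by [].
Qed.

Lemma ex3 {Q : 'I_3 -> bool} : (exists m, Q m) -> [|| Q ord0, Q i1 | Q i2].
Proof. by case=> m; case: (ord3 m) => [->|[->|->]] ->; rewrite ?orbT. Qed.

Lemma hall_bool {s00 s01 s02 s10 s11 s12 s20 s21 s22 : bool} :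
 [|| s00, s01 | s02] -> [|| s10, s11 | s12] -> [|| s20, s21 | s22] ->
 [|| s00, s10 | s20] -> [|| s01, s11 | s21] -> [|| s02, s12 | s22] ->
 (s01 || s11) || (s02 || s12) -> (s01 || s21) || (s02 || s22) -> (s11 || s21) || (s12 || s22) ->
 (s00 || s10) || (s02 || s12) -> (s00 || s20) || (s02 || s22) -> (s10 || s20) || (s12 || s22) ->
 (s00 || s10) || (s01 || s11) -> (s00 || s20) || (s01 || s21) -> (s10 || s20) || (s11 || s21) ->
 [|| s00 && s11 && s22, s00 && s12 && s21, s01 && s10 && s22,
     s01 && s12 && s20, s02 && s10 && s21 | s02 && s11 && s20].
Proof. by case: s00; case: s01; case: s02; case: s10; case: s11; case: s12;
  case: s20; case: s21; case: s22. Qed.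

Definition mk3 {T} (x y z : T) (j : 'I_3) : T :=
  if val j == 0%N then x else if val j == 1%N then y else z.

Lemma mk3_inj (a b c : 'I_3) : a != b -> a != c -> b != c -> injective (mk3 a b c).
Proof.
move=> ab ac bc x y.
case: (ord3 x) => [->|[->|->]]; case: (ord3 y) => [->|[->|->]] //; rewrite /mk3 /= => E;
 by move: ab ac bc; rewrite E ?eqxx.
Qed.

Lemma perm_of3 (S : 'I_3 -> 'I_3 -> bool) (a b c : 'I_3) :
  a != b -> a != c -> b != c -> S ord0 a && S i1 b && S i2 c ->
  exists pi : {perm 'I_3}, forall i, S i (pi i).
Proof.
move=> ab ac bc /andP[/andP[Ha Hb] Hc].
exists (perm (mk3_inj _ _ _ ab ac bc)) => i; rewrite permE.
by case: (ord3 i) => [->|[->|->]].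
Qed.

Lemma cpair (S : 'I_3 -> 'I_3 -> bool) m i i' k1 k2 :
 (forall m i i', i != i' -> exists k, k != m /\ (S i k || S i' k)) ->
 i != i' -> (forall k, k != m -> k = k1 \/ k = k2) ->
 (S i k1 || S i' k1) || (S i k2 || S i' k2).
Proof.
move=> Hc H H2; have [k [k1m Sk]] := Hc m i i' H.
by case: (H2 k k1m) => <-; rewrite Sk ?orbT.
Qed.

Lemma hall3 (S : 'I_3 -> 'I_3 -> bool) :
 (forall i, exists m, S i m) -> (forall m, exists i, S i m) ->
 (forall m i i', i != i' -> exists k, k != m /\ (S i k || S i' k)) ->
 exists pi : {perm 'I_3}, forall i, S i (pi i).
Proof.
move=> Ha Hb Hc.
have o0 : forall k, k != ord0 -> k = i1 \/ k = i2.
  by move=> k; case: (ord3 k) => [->|[->|->]]; auto.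
have o1 : forall k, k != i1 -> k = ord0 \/ k = i2.
  by move=> k; case: (ord3 k) => [->|[->|->]]; auto.
have o2 : forall k, k != i2 -> k = ord0 \/ k = i1.
  by move=> k; case: (ord3 k) => [->|[->|->]]; auto.
have := hall_bool (ex3 (Ha ord0)) (ex3 (Ha i1)) (ex3 (Ha i2))
  (ex3 (Hb ord0)) (ex3 (Hb i1)) (ex3 (Hb i2))
  (cpair _ ord0 ord0 i1 _ _ Hc isT o0) (cpair _ ord0 ord0 i2 _ _ Hc isT o0) (cpair _ ord0 i1 i2 _ _ Hc isT o0)
  (cpair _ i1 ord0 i1 _ _ Hc isT o1) (cpair _ i1 ord0 i2 _ _ Hc isT o1) (cpair _ i1 i1 i2 _ _ Hc isT o1)
  (cpair _ i2 ord0 i1 _ _ Hc isT o2) (cpair _ i2 ord0 i2 _ _ Hc isT o2) (cpair _ i2 i1 i2 _ _ Hc isT o2).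
case/or3P => [H|H|/orP[H|/orP[H|/orP[H|H]]]]; by apply: (@perm_of3 S _ _ _ _ _ _ H).
Qed.

Definition cxf (N a b : nat) (k : 'I_3) : nat :=
  if val k == 0%N then minn a (minn b N)
  else if val k == 1%N then (minn b N - minn a (minn b N))%N
  else (N - minn b N)%N.
Lemma cxf_sum N a b : (cxf N a b ord0 + cxf N a b (inord 1) + cxf N a b (inord 2))%N = N.
Proof. rewrite inord1 inord2 /cxf /=; lia. Qed.
Definition cutp N a b : cut2 N := Cut (cxf_sum N a b).

Lemma cx_cutp0 N a b : (a <= b <= N)%N -> cx (cutp N a b) ord0 = a.
Proof. rewrite /= /cxf /=; lia. Qed.
Lemma cx_cutp1 N a b : (a <= b <= N)%N -> cx (cutp N a b) i1 = (b - a)%N.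
Proof. rewrite /= /cxf /=; lia. Qed.
Lemma cx_cutp2 N a b : (a <= b <= N)%N -> cx (cutp N a b) i2 = (N - b)%N.
Proof. rewrite /= /cxf /=; lia. Qed.

Lemma adj_cutp N a b a' b' : (a <= b <= N)%N -> (a' <= b' <= N)%N ->
  (b - a <= b' - a' + 1)%N -> (b' - a' <= b - a + 1)%N ->
  (b <= b' + 1)%N -> (b' <= b + 1)%N -> Defs.adjacent (cutp N a b) (cutp N a' b').
Proof.
move=> H H' h1 h2 h3 h4 i; case: (ord3 i) => [->|[->|->]] // _.
  by rewrite !cx_cutp1 //; lia.
by rewrite !cx_cutp2 //; lia.
Qed.

Definition rk (l : 'I_3) : nat :=
  if val l == 1%N then 0 else if val l == 2%N then 1 else 2.
Lemma rk_le2 l : (rk l <= 2)%N.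
Proof. by rewrite /rk; case: ifP => //; case: ifP. Qed.
Lemma rk_inj : injective rk.
Proof.
move=> x y; case: (ord3 x) => [->|[->|->]]; case: (ord3 y) => [->|[->|->]] //.
Qed.
Definition med3 (x y z : nat) := maxn (minn x y) (minn (maxn x y) z).

Section Alg.
Variable N : nat.
Variable P : 'I_3 -> cut2 N -> 'I_3.

Definition rhox (x : cut2 N) :=
  med3 (rk (P ord0 x)) (rk (P i1 x)) (rk (P i2 x)).
Definition rho a b := rhox (cutp N a b).

Lemma rhox_some x : exists i, rk (P i x) = rhox x.
Proof.
rewrite /rhox /med3.
have := rk_le2 (P ord0 x); have := rk_le2 (P i1 x); have := rk_le2 (P i2 x).
set r0 := rk (P ord0 x); set r1 := rk (P i1 x); set r2 := rk (P i2 x).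
move=> h2 h1 h0.
have: (maxn (minn r0 r1) (minn (maxn r0 r1) r2) == r0) ||
      (maxn (minn r0 r1) (minn (maxn r0 r1) r2) == r1) ||
      (maxn (minn r0 r1) (minn (maxn r0 r1) r2) == r2) by lia.
case/orP => [/orP[]|] /eqP ->; by eexists.
Qed.

Lemma rhox_two x i i' : i != i' -> P i x = P i' x -> rhox x = rk (P i x).
Proof.
rewrite /rhox /med3 => ne E.
case: (ord3 i) ne E => [->|[->|->]]; case: (ord3 i') => [->|[->|->]] // _ ->; lia.
Qed.

Lemma rhox_le2 x : (rhox x <= 2)%N.
Proof.
rewrite /rhox /med3.
have := rk_le2 (P ord0 x); have := rk_le2 (P i1 x); have := rk_le2 (P i2 x); lia.
Qed.

Record good : Prop := Good {
  g_row : forall i a a' b, (a <= a' <= b)%N -> (b <= N)%N ->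
     (rk (P i (cutp N a b)) <= rk (P i (cutp N a' b)))%N;
  g_col : forall i a b b', (a <= b <= b')%N -> (b' <= N)%N ->
     rk (P i (cutp N a b)) = 0%N -> rk (P i (cutp N a b')) = 0%N;
  g_left : forall i b, (0 < b <= N)%N -> (rk (P i (cutp N 0 b)) <= 1)%N;
  g_diag : forall i b, (b <= N)%N -> (0 < rk (P i (cutp N b b)))%N;
  g_top : forall i a, (a <= N)%N -> rk (P i (cutp N a N)) != 1%N;
  g_00 : forall i, rk (P i (cutp N 0 0)) = 1%N }.

Hypothesis gP : good.

Lemma rho_mono a a' b : (a <= a' <= b)%N -> (b <= N)%N -> (rho a b <= rho a' b)%N.
Proof.
move=> h1 h2; rewrite /rho /rhox /med3.
have := g_row gP ord0 _ _ _ h1 h2; have := g_row gP i1 _ _ _ h1 h2; have := g_row gP i2 _ _ _ h1 h2; lia.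
Qed.
Lemma rho_col a b b' : (a <= b <= b')%N -> (b' <= N)%N -> rho a b = 0%N -> rho a b' = 0%N.
Proof.
move=> h1 h2; rewrite /rho /rhox /med3.
have := g_col gP ord0 _ _ _ h1 h2; have := g_col gP i1 _ _ _ h1 h2; have := g_col gP i2 _ _ _ h1 h2.
have := rk_le2 (P ord0 (cutp N a b')); have := rk_le2 (P i1 (cutp N a b'));
have := rk_le2 (P i2 (cutp N a b')); lia.
Qed.
Lemma rho_le2 a b : (rho a b <= 2)%N.
Proof. exact: rhox_le2. Qed.
Lemma rho_left b : (0 < b <= N)%N -> (rho 0 b <= 1)%N.
Proof.
move=> h; rewrite /rho /rhox /med3.
have := g_left gP ord0 _ h; have := g_left gP i1 _ h; have := g_left gP i2 _ h; lia.
Qed.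
Lemma rho_diag b : (b <= N)%N -> (0 < rho b b)%N.
Proof.
move=> h; rewrite /rho /rhox /med3.
have := g_diag gP ord0 _ h; have := g_diag gP i1 _ h; have := g_diag gP i2 _ h; lia.
Qed.
Lemma rho_top a : (a <= N)%N -> rho a N != 1%N.
Proof.
move=> h; rewrite /rho /rhox /med3.
have := g_top gP ord0 _ h; have := g_top gP i1 _ h; have := g_top gP i2 _ h; lia.
Qed.
Lemma rho00 : rho 0 0 = 1%N.
Proof. by rewrite /rho /rhox !g_00. Qed.
End Alg.
Arguments rho_mono {N P}.
Arguments rho_col {N P}.
Arguments rho_le2 {N P}.
Arguments rho_left {N P}.
Arguments rho_diag {N P}.
Arguments rho_top {N P}.
Arguments rho00 {N P}.
Arguments rhox_some {N} P.
Arguments rhox_two {N} P.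
Arguments rhox_le2 {N} P.

Section Progs.
Variable N : nat.
Definition F := (trunc_log 2 N).+1.
Definition qmed a b : prog N nat :=
  bind (ask ord0 (cutp N a b)) (fun l0 => bind (ask i1 (cutp N a b)) (fun l1 =>
  bind (ask i2 (cutp N a b)) (fun l2 => ret (med3 (rk l0) (rk l1) (rk l2))))).
Definition search1 b : prog N nat :=
  bsearch (fun x => bind (qmed x.-1 b) (fun r => ret (r == 0)%N)) F 0 b.+1.
Definition rowhas2 b : prog N bool :=
  bind (search1 b) (fun s => bind (qmed s b) (fun r => ret (r == 1)%N)).
Definition search3 b p' : prog N nat :=
  bsearch (fun x => bind (qmed x b) (fun r => ret (r <= 1)%N)) F p' b.+1.
Definition tri b p p' r : 'I_3 -> cut2 N :=
  if p' == p then mk3 (cutp N p.-1 b) (cutp N p b) (cutp N p b.+1)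
  else if (r + 3 <= p)%N then mk3 (cutp N r b) (cutp N r.+1 b) (cutp N r.+1 b.+1)
  else mk3 (cutp N (maxn p' (p - 2)) b) (cutp N p.-1 b.+1) (cutp N p b.+1).
Definition qrow (xs : 'I_3 -> cut2 N) i : prog N ('I_3 -> 'I_3) :=
  bind (ask i (xs ord0)) (fun a => bind (ask i (xs i1)) (fun b =>
  bind (ask i (xs i2)) (fun c => ret (mk3 a b c)))).
Definition qall xs : prog N ('I_3 -> 'I_3 -> 'I_3) :=
  bind (qrow xs ord0) (fun f0 => bind (qrow xs i1) (fun f1 =>
  bind (qrow xs i2) (fun f2 => ret (mk3 f0 f1 f2)))).
Definition pickpi (lab : 'I_3 -> 'I_3 -> 'I_3) : {perm 'I_3} :=
  odflt 1%g [pick pi : {perm 'I_3} | [forall i, [exists j, lab i j == pi i]]].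
Definition alg : prog N (('I_3 -> cut2 N) * {perm 'I_3}) :=
  bind (bsearch rowhas2 F 0 N) (fun b =>
  bind (search1 b.+1) (fun p => bind (search1 b) (fun p' => bind (search3 b p') (fun r =>
  bind (qall (tri b p p' r)) (fun lab => ret (tri b p p' r, pickpi lab)))))).

Lemma cost_qmed a b : cost (qmed a b) (1 + (1 + (1 + 0))).
Proof.
apply: cost_bind; first exact: cost_ask. move=> ?.
apply: cost_bind; first exact: cost_ask. move=> ?.
apply: cost_bind; first exact: cost_ask. move=> ?.
exact: cost_ret.
Qed.
Lemma cost_search1 b : cost (search1 b) (F * (3 + 0)).
Proof.
apply: cost_bsearch => m; apply: cost_bind; first exact: cost_qmed.
move=> ?; exact: cost_ret.
Qed.
Lemma cost_rowhas2 b : cost (rowhas2 b) (F * (3 + 0) + (3 + 0)).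
Proof.
apply: cost_bind; first exact: cost_search1. move=> ?.
apply: cost_bind; first exact: cost_qmed. move=> ?; exact: cost_ret.
Qed.
Lemma cost_search3 b p' : cost (search3 b p') (F * (3 + 0)).
Proof.
apply: cost_bsearch => m; apply: cost_bind; first exact: cost_qmed.
move=> ?; exact: cost_ret.
Qed.
Lemma cost_qrow xs i : cost (qrow xs i) (1 + (1 + (1 + 0))).
Proof.
apply: cost_bind; first exact: cost_ask. move=> ?.
apply: cost_bind; first exact: cost_ask. move=> ?.
apply: cost_bind; first exact: cost_ask. move=> ?.
exact: cost_ret.
Qed.
Lemma cost_qall xs : cost (qall xs) (3 + (3 + (3 + 0))).
Proof.
apply: cost_bind; first exact: cost_qrow. move=> ?.
apply: cost_bind; first exact: cost_qrow. move=> ?.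
apply: cost_bind; first exact: cost_qrow. move=> ?.
exact: cost_ret.
Qed.
Lemma cost_alg : cost alg (F * (F * (3 + 0) + (3 + 0)) +
   (F * (3 + 0) + (F * (3 + 0) + (F * (3 + 0) + ((3 + (3 + (3 + 0))) + 0))))).
Proof.
apply: cost_bind; first by apply: cost_bsearch => m; exact: cost_rowhas2. move=> b.
apply: cost_bind; first exact: cost_search1. move=> p.
apply: cost_bind; first exact: cost_search1. move=> p'.
apply: cost_bind; first exact: cost_search3. move=> r.
apply: cost_bind; first exact: cost_qall. move=> ?.
exact: cost_ret.
Qed.
End Progs.

Section Specs.
Variable N : nat.
Variable P : 'I_3 -> cut2 N -> 'I_3.
Hypothesis gP : good N P.
Hypothesis N0 : (0 < N)%N.

Notation rho := (rho N P).

Lemma lenF b : (b <= N)%N -> (b.+1 <= 2 ^ F N)%N.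
Proof.
move=> h; apply: leq_ltn_trans (trunc_log_ltn N (isT : (1 < 2)%N)); by [].
Qed.

Lemma spec_qmed a b : spec P (qmed N a b) (fun r => r = rho a b).
Proof.
apply: spec_bind; first exact: spec_ask (fun l => l = _) erefl. move=> l0 ->.
apply: spec_bind; first exact: spec_ask (fun l => l = _) erefl. move=> l1 ->.
apply: spec_bind; first exact: spec_ask (fun l => l = _) erefl. move=> l2 ->.
exact: spec_ret.
Qed.

Definition Q1 b s := (s <= b)%N /\ (forall a, (a < s)%N -> rho a b = 0%N) /\ (0 < rho s b)%N.

Lemma Q1_pos b s a : (b <= N)%N -> Q1 b s -> (s <= a <= b)%N -> (0 < rho a b)%N.
Proof.
move=> bN [h1 [h2 h3]] h; apply: leq_trans h3 _; exact: rho_mono.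
Qed.

Lemma spec_search1 b : (b <= N)%N -> spec P (search1 N b) (Q1 b).
Proof.
move=> bN.
apply: spec_weaken; first apply: (@spec_bsearch N P _ (fun x => x = 0%N \/ rho x.-1 b = 0%N)).
- by left.
- by case => // h; move: (rho_diag gP _ bN); rewrite /= h.
- by [].
- by rewrite subn0; exact: lenF.
- move=> m /andP[m1 m2].
  apply: spec_bind; first exact: spec_qmed. move=> r ->.
  apply: spec_ret; split; first by move/eqP=> ->; right.
  by case=> [h|->]; [move: m1; rewrite h|].
move=> s [/andP[_ sb] [Gs nGs]]; split; first by [].
split.
- move=> a ah; case: Gs => [h|h]; first by move: ah; rewrite h.
  have : (rho a b <= rho s.-1 b)%N by apply: rho_mono => //; lia.
  rewrite h; lia.
- by rewrite lt0n; apply/negP => /eqP h; apply: nGs; right.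
Qed.

Definition Gout b := exists a, (a <= b)%N /\ rho a b = 1%N.

Lemma spec_rowhas2 b : (b <= N)%N -> spec P (rowhas2 N b) (fun t => t = true <-> Gout b).
Proof.
move=> bN; apply: spec_bind; first exact: spec_search1. move=> s [s1 [s2 s3]].
apply: spec_bind; first exact: spec_qmed. move=> r ->.
apply: spec_ret; split.
  by move/eqP=> h; exists s.
case=> a [ab ra]; apply/eqP.
have sa : (s <= a)%N.
  rewrite leqNgt; apply/negP => h; move: (s2 a h); by rewrite ra.
have := rho_mono gP s a b; rewrite sa ab ra => /(_ isT bN); lia.
Qed.

Lemma spec_outer : spec P (bsearch (rowhas2 N) (F N) 0 N)
  (fun b => (b < N)%N /\ Gout b /\ ~ Gout b.+1).
Proof.
apply: spec_weaken; first apply: (@spec_bsearch N P _ (Gout)).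
- by exists 0%N; split => //; exact: rho00.
- by case=> a [aN ra]; move: (rho_top gP _ aN); rewrite ra.
- exact: N0.
- rewrite subn0; apply: ltnW; exact: lenF.
- move=> m /andP[_ mN]; apply: spec_rowhas2; exact: ltnW.
by move=> b [/andP[_ bN] [h1 h2]].
Qed.

Definition Q3 b p' r := (p' <= r <= b)%N /\ (rho r b <= 1)%N /\
   ~ ((r.+1 <= b)%N /\ (rho r.+1 b <= 1)%N).

Lemma spec_search3 b p' : (b <= N)%N -> (p' <= b)%N -> (rho p' b <= 1)%N ->
  spec P (search3 N b p') (Q3 b p').
Proof.
move=> bN pb rp.
apply: spec_weaken; first apply: (@spec_bsearch N P _ (fun x => (x <= b)%N /\ (rho x b <= 1)%N)).
- by [].
- by case; rewrite ltnn.
- by [].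
- apply: leq_trans (leq_subr _ _) _; exact: lenF.
- move=> m /andP[m1 m2].
  apply: spec_bind; first exact: spec_qmed. move=> r ->.
  apply: spec_ret; split; first by move=> h; split => //; lia.
  by case=> _ ->.
move=> r [/andP[r1 r2] [[h1 h2] h3]]; split; first by rewrite r1.
by split.
Qed.
End Specs.

Lemma adj_refl N (x : cut2 N) : Defs.adjacent x x.
Proof. move=> i _; lia. Qed.

Lemma adj_mk3 N (x y z : cut2 N) : Defs.adjacent x y -> Defs.adjacent y x -> Defs.adjacent x z ->
  Defs.adjacent z x -> Defs.adjacent y z -> Defs.adjacent z y ->
  forall j k, Defs.adjacent (mk3 x y z j) (mk3 x y z k).
Proof.
move=> h1 h2 h3 h4 h5 h6 j k.
by case: (ord3 j) => [->|[->|->]]; case: (ord3 k) => [->|[->|->]]; rewrite /mk3 /=;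
  try apply: adj_refl.
Qed.

Ltac adjt := apply: adj_cutp; lia.

Section Final.
Variable N : nat.
Variable P : 'I_3 -> cut2 N -> 'I_3.
Hypothesis gP : good N P.
Hypothesis N0 : (0 < N)%N.
Notation rho := (rho N P).

Lemma tri_ok b p p' r : (b < N)%N -> Gout N P b -> ~ Gout N P b.+1 ->
  Q1 N P b.+1 p -> Q1 N P b p' -> Q3 N P b p' r ->
  (forall j k, Defs.adjacent (tri N b p p' r j) (tri N b p p' r k)) /\
  [/\ rhox N P (tri N b p p' r ord0) != rhox N P (tri N b p p' r i1),
      rhox N P (tri N b p p' r ord0) != rhox N P (tri N b p p' r i2) &
      rhox N P (tri N b p p' r i1) != rhox N P (tri N b p p' r i2)].
Proof.
move=> bN [a0 [a0b ra0]] nG [p1 [p2 p3]] [q1 [q2 q3]] [/andP[r1 r2] [r3 r4]].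
have cN : (b.+1 <= N)%N by [].
have bN' : (b <= N)%N by lia.
have d1 : forall a, (p <= a <= b.+1)%N -> rho a b.+1 = 2%N.
  move=> a ha; have := rho_mono gP p a b.+1 ha cN; have := rho_le2 (P:=P) a b.+1.
  have : rho a b.+1 != 1%N by apply/eqP => h; apply: nG; exists a; split => //; lia.
  lia.
have d2 : rho p' b = 1%N.
  have sa : (p' <= a0)%N.
    rewrite leqNgt; apply/negP => h; move: (q2 a0 h); by rewrite ra0.
  have := rho_mono gP p' a0 b; rewrite sa a0b ra0 => /(_ isT bN'); lia.
have d3 : forall a, (p' <= a <= r)%N -> rho a b = 1%N.
  move=> a ha; have h1 := rho_mono gP p' a b.
  have h2 := rho_mono gP a r b; lia.
have d4 : forall a, (r < a <= b)%N -> rho a b = 2%N.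
  move=> a ha; have h1 := rho_mono gP r.+1 a b.
  have := rho_le2 (P:=P) r.+1 b; have := rho_le2 (P:=P) a b.
  have : ~ (rho r.+1 b <= 1)%N by move=> h; apply: r4; split => //; lia.
  lia.
have d5 : (0 < p)%N.
  rewrite lt0n; apply/eqP => p0; have := rho_left gP b.+1; rewrite cN => /(_ isT).
  rewrite d1 //; lia.
have d6 : (p' <= p)%N.
  rewrite leqNgt; apply/negP => h.
  have h1 := q2 p'.-1 (ltac:(lia)).
  have h2 := rho_col gP p'.-1 b b.+1 (ltac:(lia)) cN h1.
  rewrite d1 in h2; [by [] | lia].
rewrite /tri; case: eqP => [E|E].
  subst p'.
  have e0 := q2 p.-1 (ltac:(lia)).
  have e2 := d1 p (ltac:(lia)).
  split; first by apply: adj_mk3; adjt.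
  by rewrite /mk3 /= /rho in e0 d2 e2 *; rewrite e0 d2 e2.
case: ifP => h3.
  have e1 := d3 r (ltac:(lia)).
  have e2 := d4 r.+1 (ltac:(lia)).
  have e0 := p2 r.+1 (ltac:(lia)).
  split; first by apply: adj_mk3; adjt.
  by rewrite /mk3 /= /rho in e0 e1 e2 *; rewrite e0 e1 e2.
have e1 := d3 (maxn p' (p - 2)) (ltac:(lia)).
have e0 := p2 p.-1 (ltac:(lia)).
have e2 := d1 p (ltac:(lia)).
split; first by apply: adj_mk3; adjt.
by rewrite /mk3 /= /rho in e0 e1 e2 *; rewrite e0 e1 e2.
Qed.
End Final.

Section Sdr.
Variable N : nat.
Variable P : 'I_3 -> cut2 N -> 'I_3.

Lemma sdr (xs : 'I_3 -> cut2 N) :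
  [/\ rhox N P (xs ord0) != rhox N P (xs i1), rhox N P (xs ord0) != rhox N P (xs i2) &
      rhox N P (xs i1) != rhox N P (xs i2)] ->
  exists pi : {perm 'I_3}, forall i, exists j, P i (xs j) = pi i.
Proof.
move=> [d01 d02 d12].
have l0 := rhox_le2 P (xs ord0); have l1 := rhox_le2 P (xs i1); have l2 := rhox_le2 P (xs i2).
have onto : forall v, (v <= 2)%N -> exists j, rhox N P (xs j) = v.
  move=> v hv.
  have : [|| rhox N P (xs ord0) == v, rhox N P (xs i1) == v | rhox N P (xs i2) == v] by lia.
  by case/or3P => /eqP h; eexists; exact: h.
have [pi Hpi] : exists pi : {perm 'I_3}, forall i, [exists j, P i (xs j) == pi i];
  last first.
  exists pi => i; have /existsP[j /eqP hj] := Hpi i; by exists j.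
apply: (@hall3 (fun i m => [exists j, P i (xs j) == m])).
- by move=> i; exists (P i (xs ord0)); apply/existsP; exists ord0.
- move=> m; have [j hj] := onto (rk m) (rk_le2 m).
  have [i hi] := rhox_some P (xs j); exists i; apply/existsP; exists j.
  by apply/eqP; apply: rk_inj; rewrite hi hj.
- move=> m i i' ne.
  have [j hj] : exists j, rhox N P (xs j) != rk m.
    case: (eqVneq (rhox N P (xs ord0)) (rk m)) => h; last by exists ord0.
    by exists i1; rewrite -h eq_sym.
  case: (eqVneq (P i (xs j)) m) => h1.
    case: (eqVneq (P i' (xs j)) m) => h2.
      by move: hj; rewrite (rhox_two P _ _ _ ne (etrans h1 (esym h2))) h1 eqxx.
    exists (P i' (xs j)); split => //; apply/orP; right; apply/existsP; exists j; by [].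
  exists (P i (xs j)); split => //; apply/orP; left; apply/existsP; exists j; by [].
Qed.

Lemma spec_qall xs : spec P (qall N xs) (fun lab => forall i j, lab i j = P i (xs j)).
Proof.
have qr : forall i, spec P (qrow N xs i) (fun f => forall j, f j = P i (xs j)).
  move=> i.
  apply: spec_bind; first exact: spec_ask (fun l => l = _) erefl. move=> a ->.
  apply: spec_bind; first exact: spec_ask (fun l => l = _) erefl. move=> b ->.
  apply: spec_bind; first exact: spec_ask (fun l => l = _) erefl. move=> c ->.
  by apply: spec_ret => j; case: (ord3 j) => [->|[->|->]].
apply: spec_bind; first exact: qr. move=> f0 h0.
apply: spec_bind; first exact: qr. move=> f1 h1.
apply: spec_bind; first exact: qr. move=> f2 h2.
by apply: spec_ret => i j; case: (ord3 i) => [->|[->|->]]; rewrite /mk3 /=.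
Qed.

Lemma pickpi_ok lab : (exists pi : {perm 'I_3}, forall i, exists j, lab i j = pi i) ->
  forall i, exists j, lab i j = pickpi lab i.
Proof.
move=> [pi0 H]; rewrite /pickpi; case: pickP => [pi /forallP Hp|H0] /=.
  by move=> i; have /existsP[j /eqP hj] := Hp i; exists j.
exfalso; move: (H0 pi0) => /negP; apply; apply/forallP => i.
by have [j hj] := H i; apply/existsP; exists j; rewrite hj.
Qed.

Hypothesis gP : good N P.
Hypothesis N0 : (0 < N)%N.

Lemma spec_alg : spec P (alg N) (fun res => envy_free_solution P res.1 res.2).
Proof.
apply: spec_bind; first exact: spec_outer. move=> b [bN [Gb nGb]].
apply: spec_bind; first exact: spec_search1. move=> p hp.
apply: spec_bind; first by apply: spec_search1 => //; lia. move=> p' hp'.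
have [q1 [q2 q3]] := hp'.
apply: spec_bind; first apply: spec_search3 => //; first lia.
  have [a0 [a0b ra0]] := Gb.
  have sa : (p' <= a0)%N.
    rewrite leqNgt; apply/negP => h; move: (q2 a0 h); by rewrite ra0.
  have := rho_mono gP p' a0 b; rewrite sa a0b ra0 => /(_ isT); apply; lia.
move=> r hr.
have [adj dist] := @tri_ok N P gP N0 b p p' r bN Gb nGb hp hp' hr.
apply: spec_bind; first exact: spec_qall. move=> lab hlab.
apply: spec_ret; split => //=.
have ex : exists pi : {perm 'I_3}, forall i, exists j, lab i j = pi i.
  have [pi Hpi] := sdr _ dist; exists pi => i.
  by have [j hj] := Hpi i; exists j; rewrite hlab.
move=> i; have [j hj] := pickpi_ok _ ex i; exists j; by rewrite -hj hlab.
Qed.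
End Sdr.

Local Open Scope classical_set_scope.
Local Open Scope ring_scope.

Section Real.
Variable R : realType.
Variable N : nat.
Hypothesis N0 : (0 < N)%N.

Lemma lo_cutp a b (j : 'I_3) : (a <= b <= N)%N ->
  piece_lo R (cutp N a b) j = (if j == ord0 then 0%N else if j == i1 then a else b)%:R / N%:R.
Proof.
move=> h; rewrite /piece_lo big_mkcond /= !big_ord_recr big_ord0 /=.
case: (ord3 j) => [->|[->|->]] /=; rewrite /cxf /=; congr (_%:R / _); lia.
Qed.

Lemma hi_cutp a b (j : 'I_3) : (a <= b <= N)%N ->
  piece_hi R (cutp N a b) j = if j == i2 then 1 else (if j == ord0 then a else b)%:R / N%:R.
Proof.
move=> h; rewrite /piece_hi inord2 big_mkcond /= !big_ord_recr big_ord0 /=.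
case: (ord3 j) => [->|[->|->]] //=; rewrite /cxf /=; congr (_%:R / _); lia.
Qed.

Lemma natdiv_le (a a' : nat) : (a <= a')%N -> a%:R / N%:R <= a'%:R / N%:R :> R.
Proof. by move=> h; rewrite ler_pM2r ?invr_gt0 ?ltr0n // ler_nat. Qed.
Lemma natdiv_lt (a a' : nat) : (a < a')%N -> a%:R / N%:R < a'%:R / N%:R :> R.
Proof. by move=> h; rewrite ltr_pM2r ?invr_gt0 ?ltr0n // ltr_nat. Qed.
Lemma natdiv_ge0 (a : nat) : 0 <= a%:R / N%:R :> R.
Proof. by rewrite divr_ge0 ?ler0n. Qed.
Lemma natdivN : N%:R / N%:R = 1 :> R.
Proof. by rewrite divff // pnatr_eq0 -lt0n. Qed.
Lemma natdiv_le1 (a : nat) : (a <= N)%N -> a%:R / N%:R <= 1 :> R.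
Proof. by move=> h; apply: le_trans (natdiv_le _ _ h) _; rewrite natdivN. Qed.
Lemma natdiv_lt1 (a : nat) : (a < N)%N -> a%:R / N%:R < 1 :> R.
Proof. by move=> h; apply: lt_le_trans (natdiv_lt _ _ h) _; rewrite natdivN. Qed.
Lemma natdiv_0 : 0%:R / N%:R = 0 :> R.
Proof. by rewrite mul0r. Qed.

Lemma cint_meas (c d : R) : measurable (cint c d).
Proof.
have -> : cint c d = `[c, d]%classic by rewrite set_itvcc.
exact: measurable_itv.
Qed.

Variable K : R.
Variable u : 'I_3 -> set R -> R.
Hypothesis hu : forall i, utility K (u i).
Variable P : 'I_3 -> cut2 N -> 'I_3.
Hypothesis hP : choice_of u P.

Lemma u_mono i (c d c' d' : R) : 0 <= c' -> c' <= c -> d <= d' -> d' <= 1 ->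
  u i (cint c d) <= u i (cint c' d').
Proof.
move=> h1 h2 h3 h4; have [_ [_ [_ hm]]] := hu i.
apply: hm; [exact: cint_meas | exact: cint_meas | |].
  by move=> t; rewrite /cint /= => /andP[t1 t2]; apply/andP; split; lra.
by move=> t; rewrite /cint /= => /andP[t1 t2]; apply/andP; split; lra.
Qed.

Lemma u_deg i (c : R) : 0 <= c -> c <= 1 -> u i (cint c c) <= 0.
Proof.
move=> h1 h2; have [_ [_ [hl _]]] := hu i.
by have := hl c c h1 (lexx c) h2; rewrite subrr mulr0.
Qed.

Lemma u_pos i (c d : R) : 0 <= c -> c < d -> d <= 1 -> 0 < u i (cint c d).
Proof. by move=> h1 h2 h3; have [_ [hp _]] := hu i; apply: hp. Qed.

Lemma transfer i x y j k : j != k -> P i x = j ->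
  piece_lo R y j <= piece_lo R x j -> piece_hi R x j <= piece_hi R y j ->
  0 <= piece_lo R y j -> piece_hi R y j <= 1 ->
  piece_lo R x k <= piece_lo R y k -> piece_hi R y k <= piece_hi R x k ->
  0 <= piece_lo R x k -> piece_hi R x k <= 1 ->
  P i y != k.
Proof.
move=> jk Px h1 h2 h3 h4 h5 h6 h7 h8; apply/eqP => Py.
have c1 := hP i x k; rewrite Px eq_sym in c1; have {}c1 := c1 jk.
have c2 := hP i y j; rewrite Py in c2; have {}c2 := c2 jk.
have m1 : u i (piece (R:=R) x j) <= u i (piece (R:=R) y j) by apply: u_mono.
have m2 : u i (piece (R:=R) y k) <= u i (piece (R:=R) x k) by apply: u_mono.
suff : u i (piece (R:=R) x j) < u i (piece (R:=R) x j) by rewrite ltxx.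
lra.
Qed.

Lemma degen i x j k : j != k -> piece_lo R x j = piece_hi R x j ->
  0 <= piece_lo R x j -> piece_lo R x j <= 1 ->
  0 <= piece_lo R x k -> piece_lo R x k < piece_hi R x k -> piece_hi R x k <= 1 ->
  P i x != j.
Proof.
move=> jk E h1 h2 h3 h4 h5; apply/eqP => Px.
have c1 := hP i x k; rewrite Px eq_sym in c1; have {}c1 := c1 jk.
have d1 : u i (piece (R:=R) x j) <= 0 by rewrite /piece -E; apply: u_deg.
have d2 : 0 < u i (piece (R:=R) x k) by apply: u_pos.
suff : u i (piece (R:=R) x j) < u i (piece (R:=R) x j) by rewrite ltxx.
lra.
Qed.

Ltac epr hx hy := rewrite ?(lo_cutp _ _ _ hx) ?(lo_cutp _ _ _ hy) ?(hi_cutp _ _ _ hx) ?(hi_cutp _ _ _ hy) /=.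
Ltac ep := first [ done | exact: lexx | exact: ler01 | exact: natdivN | apply: natdiv_ge0
  | (apply: natdiv_le; lia) | (apply: natdiv_le1; lia) | (apply: natdiv_lt; lia)
  | (apply: natdiv_lt1; lia) ].

Lemma ne12 (l : 'I_3) : l != i1 -> l != i2 -> l = ord0.
Proof. by case: (ord3 l) => [->|[->|->]]; rewrite ?eqxx. Qed.

Lemma goodP : good N P.
Proof.
split.
- move=> i a a' b /andP[h1 h2] hb.
  have hx : (a <= b <= N)%N by lia. have hy : (a' <= b <= N)%N by lia.
  case: (ord3 (P i (cutp N a b))) => [E|[E|E]].
  + have n1 : P i (cutp N a' b) != i1.
      by apply: (transfer i (cutp N a b) (cutp N a' b) ord0 i1) => //; epr hx hy; ep.
    have n2 : P i (cutp N a' b) != i2.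
      by apply: (transfer i (cutp N a b) (cutp N a' b) ord0 i2) => //; epr hx hy; ep.
    by rewrite E (ne12 _ n1 n2).
  + by rewrite E.
  + have n1 : P i (cutp N a' b) != i1.
      by apply: (transfer i (cutp N a b) (cutp N a' b) i2 i1) => //; epr hx hy; ep.
    rewrite E /=; move: n1; case: (ord3 (P i (cutp N a' b))) => [->|[->|->]] //.
- move=> i a b b' /andP[h1 h2] hb E.
  have hx : (a <= b <= N)%N by lia. have hy : (a <= b' <= N)%N by lia.
  have E' : P i (cutp N a b) = i1.
    by move: E; case: (ord3 (P i (cutp N a b))) => [->|[->|->]].
  have n1 : P i (cutp N a b') != ord0.
    by apply: (transfer i (cutp N a b) (cutp N a b') i1 ord0) => //; epr hx hy; ep.
  have n2 : P i (cutp N a b') != i2.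
    by apply: (transfer i (cutp N a b) (cutp N a b') i1 i2) => //; epr hx hy; ep.
  by move: n1 n2; case: (ord3 (P i (cutp N a b'))) => [->|[->|->]].
- move=> i b /andP[b0 bN].
  have hx : (0 <= b <= N)%N by lia. have hy := hx.
  have n0 : P i (cutp N 0 b) != ord0.
    by apply: (degen i (cutp N 0 b) ord0 i1) => //; epr hx hy; ep.
  by move: n0; case: (ord3 (P i (cutp N 0 b))) => [->|[->|->]].
- move=> i b bN.
  have hx : (b <= b <= N)%N by lia. have hy := hx.
  have n1 : P i (cutp N b b) != i1.
    case: (posnP b) => [b0|b0].
      by apply: (degen i (cutp N b b) i1 i2) => //; epr hx hy; ep.
    by apply: (degen i (cutp N b b) i1 ord0) => //; epr hx hy; ep.
  by move: n1; case: (ord3 (P i (cutp N b b))) => [->|[->|->]].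
- move=> i a aN.
  have hx : (a <= N <= N)%N by lia. have hy := hx.
  have n2 : P i (cutp N a N) != i2.
    case: (posnP a) => [a0|a0].
      by apply: (degen i (cutp N a N) i2 i1) => //; epr hx hy; ep.
    by apply: (degen i (cutp N a N) i2 ord0) => //; epr hx hy; ep.
  by move: n2; case: (ord3 (P i (cutp N a N))) => [->|[->|->]].
- move=> i.
  have hx : (0 <= 0 <= N)%N by lia. have hy := hx.
  have n0 : P i (cutp N 0 0) != ord0.
    by apply: (degen i (cutp N 0 0) ord0 i2) => //; epr hx hy; ep.
  have n1 : P i (cutp N 0 0) != i1.
    by apply: (degen i (cutp N 0 0) i1 i2) => //; epr hx hy; ep.
  by move: n0 n1; case: (ord3 (P i (cutp N 0 0))) => [->|[->|->]].
Qed.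
End Real.


Theorem theorem5 :
  exists C : nat, forall (R : realType) (K eps : R), 0 < K -> 0 < eps ->
    exists t : qtree (gridN K eps),
      (depth t <= C * (trunc_log 2 (gridN K eps)).+1 ^ 2)%N /\
      forall (u : 'I_3 -> set R -> R) (P : 'I_3 -> cut2 (gridN K eps) -> 'I_3),
        (forall i, utility K (u i)) ->
        choice_of u P ->
        envy_free_solution P (run P t).1 (run P t).2.
Proof.
exists 24%N => R K eps hK he.
set N := gridN K eps.
have N0 : (0 < N)%N.
  rewrite /N /gridN absz_gt0.
  have h : 0 < Num.ceil (K / eps) by rewrite ceil_gt0 divr_gt0.
  by apply/negP => /eqP h0; move: h; rewrite h0 ltxx.
exists (alg N (fun r => Leaf r.1 r.2)); split.
  have := cost_alg N (fun r => Leaf r.1 r.2) 0 (fun _ => leqnn 0).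
  rewrite addn0 => /leq_trans; apply.
  rewrite -/(F N); have : (1 <= F N)%N by [].
  move: (F N) => f hf; nia.
move=> u P hu hP.
have gP := @goodP R N N0 K u hu P hP.
have [v [Qv Hv]] := @spec_alg N P gP N0.
by rewrite Hv.
Qed.
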